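(* Consider the single-queue bandit described in the context, with problem instance $(\lambda,\boldsymbol{\mu})$, $\boldsymbol\mu=(\mu_1,\dots,\mu_K)$. For every $\alpha\in(0,1)$ and every $\alpha$-consistent scheduling policy, the queue-regret satisfies $$\Psi(t)\ \ge\ \left(\frac{\lambda}{4}\,D(\boldsymbol{\mu})\,(1-\alpha)\,(K-1)\right)\frac{1}{t}$$ for infinitely many $t$, where $$D(\boldsymbol{\mu})=\frac{\Delta}{\mathrm{KL}\left(\mu_{\min},\frac{\mu^*+1}{2}\right)}.$$
   Context: Discrete-time queueing system with one queue and $K\ge 2$ servers indexed by $[K]=\{1,\dots,K\}$. Arrivals $A(t)\in\{0,1\}$ are i.i.d. Bernoulli($\lambda$) over time slots $t=1,2,\dots$; the service $R_k(t)\in\{0,1\}$ offered by server $k$ at time $t$ is Bernoulli($\mu_k$), independent across $k$, across $t$ and of the arrivals. Let $\mu^*=\max_k\mu_k$, attained at a unique server $k^*$, and assume $\lambda<\mu^*$. A scheduling policy chooses at each time $t$ a server $\kappa(t)\in[K]$ based only on past observations (the servers scheduled and the services they provided, and arrivals, up to time $t-1$) and possibly independent internal randomization; the service parameters are unknown to it. With $S(t)=R_{\kappa(t)}(t)$, the queue evolves as $Q(t)=(Q(t-1)+A(t)-S(t))^+$. The genie queue $Q^*(t)$ uses the same arrivals and always schedules $k^*$: $Q^*(t)=(Q^*(t-1)+A(t)-R_{k^*}(t))^+$. Both $Q(0)$ and $Q^*(0)$ are distributed according to the stationary distribution $\pi_{(\lambda,\mu^* )}$ of $Q^*$. The queue-regret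 is $\Psi(t)=\mathbb{E}[Q(t)-Q^*(t)]$. Notation: $\Delta=\mu^*-\max_{k\ne k^*}\mu_k$, $\mu_{\min}=\min_k\mu_k$, and $\mathrm{KL}(p,q)=p\log\frac pq+(1-p)\log\frac{1-p}{1-q}$ is the Bernoulli Kullback–Leibler divergence. A policy is $\alpha$-consistent ($\alpha\in(0,1)$) if for every problem instance $(\lambda,\boldsymbol\mu)$ of this type, $\mathbb{E}\left[\sum_{s=1}^t \mathbf 1\{\kappa(s)=k\}\right]=O(t^\alpha)$ as $t\to\infty$ for every $k\ne k^*$. *)

(* Defs.v *)
From HB Require Import structures.
From mathcomp Require Import all_boot all_order all_algebra.
From mathcomp Require Import all_classical all_reals all_analysis.
Set Implicit Arguments. Unset Strict Implicit. Unset Printing Implicit Defensive.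
Import Order.TTheory GRing.Theory Num.Theory.
Import numFieldNormedType.Exports.
Local Open Scope classical_set_scope.
Local Open Scope ring_scope.

Section QueueBandit.
Variable R : realType.
Variable K : nat.

Definition bern (p : R) (b : bool) : R := if b then p else 1 - p.

(* The randomness revealed in one time slot:
   ((arrival A(s), full service vector (R_k(s))_k), scheduled server kappa(s)). *)
Definition step := (bool * {ffun 'I_K -> bool} * 'I_K)%type.

Definition arr (x : step) : bool := x.1.1.
Definition srv (x : step) : {ffun 'I_K -> bool} := x.1.2.
Definition sched (x : step) : 'I_K := x.2.

Definition obs (x : step) : 'I_K * bool * bool := (sched x, srv x (sched x), arr x).

(* A (randomized) scheduling policy: given the observation history of the
   slots 1..t-1 (oldest first), a probability distribution on servers for slot t. *)
Definition policy := seq ('I_K * bool * bool) -> 'I_K -> R.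

Definition valid_policy (pol : policy) : Prop :=
  (forall h k, 0 <= pol h k) /\ (forall h, \sum_(k < K) pol h k = 1).

Definition step_prob (lam : R) (mu : 'I_K -> R) (pol : policy)
    (past : seq step) (x : step) : R :=
  bern lam (arr x) * (\prod_(k < K) bern (mu k) (srv x k))
  * pol (map obs past) (sched x).

Definition traj_prob (lam : R) (mu : 'I_K -> R) (pol : policy) (t : nat)
    (w : t.-tuple step) : R :=
  \prod_(i < t) step_prob lam mu pol (take i w) (tnth w i).

(* queue length after the slots w, starting from q0, served by [serv]:
   Q(s) = (Q(s-1) + A(s) - S(s))^+ (nat subtraction is truncated) *)
Definition qlen (q0 : nat) (serv : step -> bool) (w : seq step) : nat :=
  foldl (fun q x => (q + arr x - serv x)%N) q0 w.

Definition pol_service (x : step) : bool := srv x (sched x).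
Definition genie_service (ks : 'I_K) (x : step) : bool := srv x ks.

Definition genie_kernel (lam mus : R) (m n : nat) : R :=
  \sum_(a : bool) \sum_(r : bool)
     bern lam a * bern mus r * ((m + a - r)%N == n)%:R.

Definition stationary_dist (lam mus : R) (pi : nat -> R) : Prop :=
  (forall n, 0 <= pi n) /\
  (series pi @ \oo --> (1 : R)) /\
  (forall n, series (fun m => pi m * genie_kernel lam mus m n) @ \oo --> pi n).

(* queue-regret Psi(t) = E[Q(t) - Qstar(t)], with Q(0) = Qstar(0) ~ pi,
   independent of arrivals / services / policy randomization *)
Definition queue_regret (lam : R) (mu : 'I_K -> R) (ks : 'I_K) (pol : policy)
    (pi : nat -> R) (t : nat) : R :=
  limn (series (fun q0 : nat => pi q0 *
     \sum_(w : t.-tuple step) traj_prob lam mu pol w *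
        (((qlen q0 pol_service w)%:R : R) - (qlen q0 (genie_service ks) w)%:R))).

Definition expected_pulls (lam : R) (mu : 'I_K -> R) (pol : policy) (k : 'I_K)
    (t : nat) : R :=
  \sum_(w : t.-tuple step) traj_prob lam mu pol w *
     (count (fun x => sched x == k) w)%:R.

Definition instance (lam : R) (mu : 'I_K -> R) (ks : 'I_K) : Prop :=
  0 <= lam <= 1 /\ (forall k, 0 <= mu k <= 1) /\
  (forall k, k != ks -> mu k < mu ks) /\ lam < mu ks.

Definition alpha_consistent (alpha : R) (pol : policy) : Prop :=
  forall lam mu ks, instance lam mu ks ->
  forall k, k != ks ->
  exists C : R, exists T : nat, forall t : nat, (T <= t)%N ->
    expected_pulls lam mu pol k t <= C * (t%:R `^ alpha).

(* Bernoulli KL divergence KL(p,q) (for 0 < q < 1); the convention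
   0 * log 0 = 0 is automatic since 0 * _ = 0. *)
Definition bern_kl (p q : R) : R :=
  p * ln (p / q) + (1 - p) * ln ((1 - p) / (1 - q)).

Definition gap (mu : 'I_K -> R) (ks : 'I_K) : R :=
  mu ks - \big[Num.max/0]_(k < K | k != ks) mu k.

Definition mu_min (mu : 'I_K -> R) : R := \big[Num.min/1]_(k < K) mu k.

(* D(mu) = Delta / KL(mu_min, (mu_star+1)/2); when mu_star = 1 the KL is +infinity
   (as mu_min < 1), so D(mu) = 0. *)
Definition Dmu (mu : 'I_K -> R) (ks : 'I_K) : R :=
  if mu ks < 1 then gap mu ks / bern_kl (mu_min mu) ((mu ks + 1) / 2) else 0.

End QueueBandit.

(* Main.v *)
Require Import Defs.
From HB Require Import structures.
From mathcomp Require Import all_boot all_order all_algebra.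
From mathcomp Require Import all_classical all_reals all_analysis.
From mathcomp Require Import ring lra zify.
Import Order.TTheory GRing.Theory Num.Theory.
Import numFieldNormedType.Exports.
Local Open Scope classical_set_scope.
Local Open Scope ring_scope.
Set Implicit Arguments. Unset Strict Implicit. Unset Printing Implicit Defensive.


Section Traj.
Variable R : realType.
Variable T : finType.

Definition Tp (s : seq T -> T -> R) t (w : t.-tuple T) : R :=
  \prod_(i < t) s (take i w) (tnth w i).

Lemma Tp_rcons s t (w : t.-tuple T) x : Tp s (rcons_tuple w x) = Tp s w * s w x.
Proof.
rewrite /Tp big_ord_recr /=; congr (_ * _).
  apply: eq_bigr => i _.
  have hi : (i < size w)%N by rewrite size_tuple.
  rewrite (tnth_nth x) /= nth_rcons hi -(tnth_nth x).
  by rewrite -cats1 takel_cat // ltnW.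
have hs : size w = t by rewrite size_tuple.
rewrite (tnth_nth x) /= nth_rcons hs ltnn eqxx.
by rewrite -cats1 -{1}hs take_size_cat.
Qed.

Lemma sum_tuple_rcons t (G : t.+1.-tuple T -> R) :
  \sum_(u : t.+1.-tuple T) G u = \sum_(w : t.-tuple T) \sum_x G (rcons_tuple w x).
Proof.
rewrite pair_bigA /=.
pose h (p : t.-tuple T * T) := rcons_tuple p.1 p.2.
have hsz (u : t.+1.-tuple T) : size (take t u) == t.
  by rewrite size_takel // size_tuple.
pose g (u : t.+1.-tuple T) : t.-tuple T * T := (Tuple (hsz u), tnth u ord_max).
rewrite (reindex h) /=; last first.
  exists g => [[w x] _|u _].
    congr pair; first apply: val_inj => /=.
      by rewrite -cats1 take_size_cat // size_tuple.
    rewrite (tnth_nth x) /= nth_rcons size_tuple ltnn eqxx //.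
  apply: val_inj => /=.
  rewrite (tnth_nth (tnth u ord_max)) /= -take_nth ?size_tuple //.
  by rewrite take_oversize // size_tuple.
by [].
Qed.

Lemma sum_Tp_rcons s t (F : seq T -> R) :
  \sum_(u : t.+1.-tuple T) Tp s u * F u =
  \sum_(w : t.-tuple T) Tp s w * \sum_x s w x * F (rcons w x).
Proof.
rewrite sum_tuple_rcons; apply: eq_bigr => w _.
rewrite mulr_sumr; apply: eq_bigr => x _.
by rewrite Tp_rcons mulrA.
Qed.

Lemma sum_tuple0 (G : 0.-tuple T -> R) : \sum_(u : 0.-tuple T) G u = G [tuple].
Proof.
rewrite (eq_bigr (fun=> G [tuple])); last by move=> u _; rewrite tuple0.
by rewrite sumr_const card_tuple expn0.
Qed.

Lemma Tp0 s (u : 0.-tuple T) : Tp s u = 1.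
Proof. by rewrite /Tp big_ord0. Qed.
End Traj.
Section Model.
Variable R : realType.
Variable K : nat.

Lemma sum_pair (A B : finType) (F : A * B -> R) :
  \sum_(x : A * B) F x = \sum_a \sum_b F (a, b).
Proof. by rewrite pair_bigA; apply: eq_bigr => [[]]. Qed.

Lemma bern_sum (p : R) : \sum_b bern p b = 1.
Proof. by rewrite big_bool /= addrC subrK. Qed.

Lemma marg_ffun (m : 'I_K -> R) (j : 'I_K) (g : bool -> R) :
  \sum_(f : {ffun 'I_K -> bool}) (\prod_k bern (m k) (f k)) * g (f j) =
  \sum_b bern (m j) b * g b.
Proof.
pose H k b := bern (m k) b * (if k == j then g b else 1).
have -> : \sum_(f : {ffun 'I_K -> bool}) (\prod_k bern (m k) (f k)) * g (f j)
   = \sum_(f : {ffun 'I_K -> bool}) \prod_k H k (f k).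
  apply: eq_bigr => f _; rewrite /H big_split /=; congr (_ * _).
  by rewrite (bigD1 j) //= eqxx big1 ?mulr1 // => k /negbTE ->.
rewrite -(bigA_distr_bigA H) (bigD1 j) //= [X in _ * X]big1 ?mulr1.
  by apply: eq_bigr => b _; rewrite /H eqxx.
move=> k /negbTE hk; rewrite -(bern_sum (m k)); apply: eq_bigr => b _.
by rewrite /H hk mulr1.
Qed.

Lemma sum_step (lam : R) (mu : 'I_K -> R) (pol : policy R K) (past : seq (step K))
  (J : 'I_K -> 'I_K) (G : bool -> 'I_K -> bool -> R) :
  \sum_(x : step K) step_prob lam mu pol past x * G (arr x) (sched x) (srv x (J (sched x)))
  = \sum_k pol (map (@obs K) past) k * \sum_a bern lam a * \sum_r bern (mu (J k)) r * G a k r.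
Proof.
rewrite sum_pair (eq_bigr (fun p => \sum_k step_prob lam mu pol past (p, k) * G p.1 k (p.2 (J k))))
  ?sum_pair; last by move=> [a f] _.
under eq_bigr => a _ do rewrite exchange_big.
rewrite exchange_big /=; apply: eq_bigr => k _.
rewrite mulr_sumr; apply: eq_bigr => a _.
rewrite mulrA mulr_sumr.
rewrite (eq_bigr (fun r => bern (mu (J k)) r * (pol [seq obs i | i <- past] k * bern lam a * G a k r))); last by move=> r _; ring.
rewrite -(marg_ffun mu (J k) (fun r => pol [seq obs i | i <- past] k * bern lam a * G a k r)).
apply: eq_bigr => f _; rewrite /step_prob /arr /srv /sched /=; ring.
Qed.

End Model.

Section Inst.
Variable R : realType.
Variable K : nat.
Variables (lam : R) (mu : 'I_K -> R) (pol : policy R K).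
Hypothesis hpol : valid_policy pol.
Hypothesis hlam : 0 <= lam <= 1.
Hypothesis hmu : forall k, 0 <= mu k <= 1.

Let sP := step_prob lam mu pol.

Lemma bern_ge0 (p : R) b : 0 <= p <= 1 -> 0 <= bern p b.
Proof. by case: b => /andP[? ?] /=; lra. Qed.

Lemma sP_ge0 past x : 0 <= sP past x.
Proof.
rewrite /sP /step_prob; apply: mulr_ge0; last by case: hpol.
apply: mulr_ge0; first exact: bern_ge0.
by apply: prodr_ge0 => k _; apply: bern_ge0.
Qed.

Lemma sP_sum1 past : \sum_x sP past x = 1.
Proof.
have := sum_step lam mu pol past id (fun _ _ _ => 1).
rewrite (eq_bigr (fun x => sP past x)) ?/sP; last by move=> x _; rewrite mulr1.
move=> ->; rewrite -[RHS](proj2 hpol (map (@obs K) past)); apply: eq_bigr => k _.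
under eq_bigr => a _ do under eq_bigr => r _ do rewrite mulr1.
under eq_bigr => a _ do rewrite bern_sum mulr1.
by rewrite bern_sum mulr1.
Qed.

Lemma Tp_ge0 t (w : t.-tuple (step K)) : 0 <= Tp sP w.
Proof. by apply: prodr_ge0 => i _; apply: sP_ge0. Qed.

Lemma Tp_sum1 t : \sum_(w : t.-tuple (step K)) Tp sP w = 1.
Proof.
elim: t => [|t IH]; first by rewrite sum_tuple0 Tp0.
rewrite (eq_bigr (fun w => Tp sP w * 1)); last by move=> w _; rewrite mulr1.
rewrite (sum_Tp_rcons sP t (fun=> 1)) -[RHS]IH; apply: eq_bigr => w _.
by rewrite (eq_bigr (fun x => sP w x)) ?sP_sum1 ?mulr1 // => x _; rewrite mulr1.
Qed.

Lemma sum_sched_eq past k : \sum_x sP past x * ((sched x == k)%:R : R) = pol (map (@obs K) past) k.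
Proof.
have := sum_step lam mu pol past id (fun _ k' _ => ((k' == k)%:R : R)).
rewrite /sP => ->.
rewrite (bigD1 k) //= [X in _ + X]big1 ?addr0.
  rewrite eqxx.
  under eq_bigr => a _ do under eq_bigr => r _ do rewrite mulr1.
  under eq_bigr => a _ do rewrite bern_sum mulr1.
  by rewrite bern_sum mulr1.
by move=> j /negbTE hj; rewrite hj big1 ?mulr0 // => a _; rewrite big1 ?mulr0 // => r _; rewrite mulr0.
Qed.

Lemma count_rcons' (T : Type) (p : pred T) s x : count p (rcons s x) = (count p s + p x)%N.
Proof. by rewrite -cats1 count_cat /= addn0. Qed.

Lemma EP_step k t : expected_pulls lam mu pol k t.+1 =
  expected_pulls lam mu pol k t + \sum_(w : t.-tuple (step K)) Tp sP w * pol (map (@obs K) w) k.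
Proof.
rewrite /expected_pulls.
rewrite (sum_Tp_rcons sP t (fun u => (count (fun x => sched x == k) u)%:R)).
rewrite -big_split /=; apply: eq_bigr => w _.
rewrite -mulrDr; congr (_ * _).
under eq_bigr => x _ do rewrite count_rcons' natrD mulrDr.
rewrite big_split /= sum_sched_eq; congr (_ + _).
by rewrite -mulr_suml sP_sum1 mul1r.
Qed.

End Inst.

Section Queue.
Variable R : realType.
Variable K : nat.
Variables (lam : R) (mu : 'I_K -> R) (pol : policy R K) (ks : 'I_K).
Hypothesis hpol : valid_policy pol.
Hypothesis hlam : 0 <= lam <= 1.
Hypothesis hmu : forall k, 0 <= mu k <= 1.
Hypothesis hks : forall k, mu k <= mu ks.

Let sP := step_prob lam mu pol.

Definition Hm (h : nat -> R) (p : R) (q : nat) : R :=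
  \sum_a bern lam a * \sum_r bern p r * h (q + a - r)%N.

Definition monoh (h : nat -> R) := forall m n, (m <= n)%N -> h m <= h n.

Lemma Hm_expand h p q : Hm h p q =
  lam * (p * h q + (1 - p) * h q.+1) + (1 - lam) * (p * h q.-1 + (1 - p) * h q).
Proof.
rewrite /Hm !big_bool /= addnK subn0 addn1 addn0 subn0 subn1 //.
Qed.

Lemma Hm_mono h p : monoh h -> 0 <= p <= 1 -> monoh (Hm h p).
Proof.
move=> hh hp m n hmn; rewrite /Hm; apply: ler_sum => a _.
apply: ler_wpM2l; first exact: bern_ge0.
apply: ler_sum => r _; apply: ler_wpM2l; first exact: bern_ge0.
by apply: hh; rewrite leq_sub2r // leq_add2r.
Qed.

Lemma Hm_anti h p p' q : monoh h -> 0 <= p -> p <= p' -> p' <= 1 ->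
  Hm h p' q <= Hm h p q.
Proof.
move=> hh hp hpp hp1; rewrite !Hm_expand.
have d1 : 0 <= h q.+1 - h q by rewrite subr_ge0; apply: hh.
have d2 : 0 <= h q - h q.-1 by rewrite subr_ge0; apply: hh; apply: leq_pred.
case/andP: hlam => l0 l1.
have e1 : 0 <= lam * (p' - p) * (h q.+1 - h q) by apply: mulr_ge0 => //; apply: mulr_ge0; lra.
have e2 : 0 <= (1 - lam) * (p' - p) * (h q - h q.-1) by apply: mulr_ge0 => //; apply: mulr_ge0; lra.
have -> : lam * (p * h q + (1 - p) * h q.+1) + (1 - lam) * (p * h q.-1 + (1 - p) * h q)
  = lam * (p' * h q + (1 - p') * h q.+1) + (1 - lam) * (p' * h q.-1 + (1 - p') * h q)
    + lam * (p' - p) * (h q.+1 - h q) + (1 - lam) * (p' - p) * (h q - h q.-1) by ring.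
lra.
Qed.

Definition hid (n : nat) : R := n%:R.

Lemma hid_mono : monoh hid.
Proof. by move=> m n hmn; rewrite /hid ler_nat. Qed.

Lemma Hm_id p p' q : 0 <= p -> p <= p' -> p' <= 1 ->
  Hm hid p' q + lam * (p' - p) <= Hm hid p q.
Proof.
move=> hp hpp hp1; rewrite !Hm_expand.
have d1 : hid q.+1 - hid q = 1 by rewrite /hid -addn1 natrD addrAC subrr add0r.
have d2 : 0 <= hid q - hid q.-1 by rewrite subr_ge0; apply: hid_mono; apply: leq_pred.
case/andP: hlam => l0 l1.
have e2 : 0 <= (1 - lam) * (p' - p) * (hid q - hid q.-1) by apply: mulr_ge0 => //; apply: mulr_ge0; lra.
have -> : lam * (p * hid q + (1 - p) * hid q.+1) + (1 - lam) * (p * hid q.-1 + (1 - p) * hid q)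
  = lam * (p' * hid q + (1 - p') * hid q.+1) + (1 - lam) * (p' * hid q.-1 + (1 - p') * hid q)
    + lam * (p' - p) * (hid q.+1 - hid q) + (1 - lam) * (p' - p) * (hid q - hid q.-1) by ring.
rewrite d1 mulr1; lra.
Qed.

Lemma pol_next q0 (w : seq (step K)) (h : nat -> R) :
  \sum_x sP w x * h (qlen q0 (@pol_service K) (rcons w x)) =
  \sum_k pol (map (@obs K) w) k * Hm h (mu k) (qlen q0 (@pol_service K) w).
Proof.
apply: (etrans _ (sum_step lam mu pol w id (fun a _ r => h (qlen q0 (@pol_service K) w + a - r)%N))).
by apply: eq_bigr => x _; rewrite /qlen foldl_rcons.
Qed.

Lemma gen_next q0 (w : seq (step K)) (h : nat -> R) :
  \sum_x sP w x * h (qlen q0 (genie_service ks) (rcons w x)) =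
  Hm h (mu ks) (qlen q0 (genie_service ks) w).
Proof.
apply: (etrans _ (etrans (sum_step lam mu pol w (fun=> ks) (fun a _ r => h (qlen q0 (genie_service ks) w + a - r)%N)) _)).
  by apply: eq_bigr => x _; rewrite /qlen foldl_rcons.
by rewrite -mulr_suml (proj2 hpol) mul1r.
Qed.

Lemma dominance t q0 h : monoh h ->
  \sum_(w : t.-tuple (step K)) Tp sP w * h (qlen q0 (genie_service ks) w) <=
  \sum_(w : t.-tuple (step K)) Tp sP w * h (qlen q0 (@pol_service K) w).
Proof.
elim: t h => [|t IH] h hh; first by rewrite !sum_tuple0.
rewrite (sum_Tp_rcons sP t (fun u => h (qlen q0 (genie_service ks) u))).
rewrite (sum_Tp_rcons sP t (fun u => h (qlen q0 (@pol_service K) u))).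
under eq_bigr => w _ do rewrite gen_next.
under [X in _ <= X]eq_bigr => w _ do rewrite pol_next.
apply: (le_trans (IH _ (Hm_mono hh (hmu ks)))).
apply: ler_sum => w _; apply: ler_wpM2l; first exact: Tp_ge0.
rewrite -[X in X <= _]mul1r -(proj2 hpol (map (@obs K) w)) mulr_suml.
apply: ler_sum => k _; apply: ler_wpM2l; first by case: hpol.
by apply: Hm_anti => //; [case/andP: (hmu k) | case/andP: (hmu ks)].
Qed.

Lemma regret_step t q0 :
  lam * \sum_(w : t.-tuple (step K)) Tp sP w *
     \sum_k pol (map (@obs K) w) k * (mu ks - mu k) <=
  \sum_(w : t.+1.-tuple (step K)) Tp sP w *
     ((qlen q0 (@pol_service K) w)%:R - (qlen q0 (genie_service ks) w)%:R).
Proof.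
under [X in _ <= X]eq_bigr => w _ do rewrite mulrBr.
rewrite sumrB.
rewrite (sum_Tp_rcons sP t (fun u => hid (qlen q0 (@pol_service K) u))).
rewrite (sum_Tp_rcons sP t (fun u => hid (qlen q0 (genie_service ks) u))).
under [X in _ <= X - _]eq_bigr => w _ do rewrite pol_next.
under [X in _ <= _ - X]eq_bigr => w _ do rewrite gen_next.
have dom := dominance t q0 (Hm_mono hid_mono (hmu ks)).
rewrite mulr_sumr.
have step : forall w : t.-tuple (step K),
  lam * (Tp sP w * \sum_k pol [seq obs i | i <- w] k * (mu ks - mu k)) +
  Tp sP w * Hm hid (mu ks) (qlen q0 (@pol_service K) w) <=
  Tp sP w * \sum_k pol [seq obs i | i <- w] k * Hm hid (mu k) (qlen q0 (@pol_service K) w).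
  move=> w; rewrite mulrCA -mulrDr; apply: ler_wpM2l; first exact: Tp_ge0.
  rewrite -[X in _ + X]mul1r -(proj2 hpol (map (@obs K) w)) !mulr_suml mulr_sumr -big_split /=.
  apply: ler_sum => k _.
  have := Hm_id (qlen q0 (@pol_service K) w) (proj1 (andP (hmu k))) (hks k) (proj2 (andP (hmu ks))).
  have := proj1 hpol (map (@obs K) w) k.
  set P := pol _ k; set A := Hm _ _ _; set B := Hm _ _ _ => hP hAB.
  have := ler_wpM2l hP hAB; lra.
rewrite lerBrDr; apply: (le_trans (lerD (lexx _) dom)).
rewrite -big_split /=; apply: ler_sum => w _; exact: step.
Qed.

End Queue.

Section Series.
Variable R : realType.
Import numFieldNormedType.Exports.
Local Open Scope classical_set_scope.

Lemma series_lb (pi c : nat -> R) d B :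
  (forall n, 0 <= pi n) -> series pi @ \oo --> (1 : R) ->
  (forall n, d <= c n) -> (forall n, c n <= B) ->
  d <= limn (series (fun n => pi n * c n)).
Proof.
move=> hpi hcv hd hB.
have hlim : limn (series pi) = 1 by apply: cvg_lim.
have hcvp : cvgn (series pi) by apply/cvg_ex; exists 1.
have hpi1 n : series pi n <= 1.
  rewrite -hlim; apply: nondecreasing_cvgn_le => //.
  by apply: nondecreasing_series => k _ _.
pose u n := pi n * (c n - d).
have hu0 n : 0 <= u n by apply: mulr_ge0 => //; rewrite subr_ge0.
have hnd : {homo series u : n m / (n <= m)%N >-> n <= m}.
  by apply: nondecreasing_series => k _ _.
have hcvu : cvgn (series u).
  apply: nondecreasing_is_cvgn => //.
  exists (B - d) => _ [n _ <-].
  have -> : series u n = \sum_(0 <= k < n) u k by [].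
  apply: (le_trans (y := \sum_(0 <= k < n) pi k * (B - d))).
    apply: ler_sum => k _; apply: ler_wpM2l => //; by rewrite lerD2r.
  rewrite -mulr_suml; have -> : \sum_(0 <= k < n) pi k = series pi n by [].
  have hBd : 0 <= B - d by rewrite subr_ge0; apply: (le_trans (hd 0)).
  by rewrite -[X in _ <= X]mul1r ler_wpM2r.
have -> : (fun n => pi n * c n) = u + d *: pi.
  by apply/funext => n; rewrite /u /= !fctE mulrBr; rewrite /GRing.scale /=; ring.
rewrite lim_seriesD //; last exact: is_cvg_seriesZ.
rewrite lim_seriesZ // hlim.
have : series u 0 <= limn (series u) by apply: nondecreasing_cvgn_le.
have -> : series u 0 = 0 by rewrite /series /= big_geq.
rewrite /GRing.scale /=; lra.
Qed.
End Series.

Import numFieldNormedType.Exports.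
Local Open Scope classical_set_scope.

Lemma qdiff_gen (R : realType) (K : nat) (s1 s2 : step K -> bool) (w : seq (step K)) (q q' : nat) :
  ((qlen q s1 w)%:R - (qlen q' s2 w)%:R : R) <= q%:R - q'%:R + 2 * (size w)%:R.
Proof.
elim: w q q' => [|x w IH] q q' /=; first by rewrite mulr0 addr0.
apply: (le_trans (IH _ _)).
have h : ((q + arr x - s1 x) + q' <= (q' + arr x - s2 x) + q + 2)%N by lia.
have := h; rewrite -(ler_nat R) !natrD => h'.
rewrite -addn1 natrD; lra.
Qed.

Lemma psi_lb (R : realType) (K : nat) (lam : R) (mu : 'I_K -> R) (pol : policy R K) (ks : 'I_K)
  (pi : nat -> R) t :
  valid_policy pol -> 0 <= lam <= 1 -> (forall k, 0 <= mu k <= 1) -> (forall k, mu k <= mu ks) ->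
  (forall n, 0 <= pi n) -> series pi @ \oo --> (1 : R) ->
  lam * \sum_(w : t.-tuple (step K)) Tp (step_prob lam mu pol) w *
     \sum_k pol (map (@obs K) w) k * (mu ks - mu k) <=
  queue_regret lam mu ks pol pi t.+1.
Proof.
move=> hpol hlam hmu hks hpi hcv.
apply: (series_lb (B := 2 * t.+1%:R)) => // q0.
  exact: regret_step.
apply: (le_trans (y := \sum_(w : t.+1.-tuple (step K)) Tp (step_prob lam mu pol) w * (2 * t.+1%:R))).
  apply: ler_sum => w _; apply: ler_wpM2l; first exact: Tp_ge0.
  by have := @qdiff_gen R K (@pol_service K) (genie_service ks) w q0 q0; rewrite size_tuple subrr add0r.
by rewrite -mulr_suml (@Tp_sum1 R K lam mu pol hpol t.+1) mul1r.
Qed.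

Lemma tupleS_rcons (T : Type) t (u : t.+1.-tuple T) :
  exists (w : t.-tuple T) x, u = rcons_tuple w x.
Proof.
have hsz : size (take t u) == t by rewrite size_takel // size_tuple.
exists (Tuple hsz), (tnth u ord_max); apply: val_inj => /=.
rewrite (tnth_nth (tnth u ord_max)) /= -take_nth ?size_tuple //.
by rewrite take_oversize // size_tuple.
Qed.

Definition obsT K := ('I_K * bool * bool)%type.

Section Obs.
Variable R : realType.
Variable K : nat.
Variables (lam : R) (mu : 'I_K -> R) (pol : policy R K).
Hypothesis hpol : valid_policy pol.
Hypothesis hlam : 0 <= lam <= 1.
Hypothesis hmu : forall k, 0 <= mu k <= 1.

Definition sO (o : seq (obsT K)) (y : obsT K) : R :=
  bern lam y.2 * bern (mu y.1.1) y.1.2 * pol o y.1.1.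

Lemma sO_ge0 o y : 0 <= sO o y.
Proof.
apply: mulr_ge0; last by case: hpol.
by apply: mulr_ge0; apply: bern_ge0.
Qed.

Lemma sO_sum_gen o (G : bool -> 'I_K -> bool -> R) :
  \sum_y sO o y * G y.2 y.1.1 y.1.2 =
  \sum_k pol o k * \sum_a bern lam a * \sum_r bern (mu k) r * G a k r.
Proof.
rewrite sum_pair sum_pair; apply: eq_bigr => k _.
rewrite exchange_big /= mulr_sumr; apply: eq_bigr => a _.
rewrite mulr_sumr mulr_sumr; apply: eq_bigr => r _.
rewrite /sO /=; ring.
Qed.

Lemma sO_sum1 o : \sum_y sO o y = 1.
Proof.
have := sO_sum_gen o (fun _ _ _ => 1).
rewrite (eq_bigr (fun y => sO o y)); last by move=> y _; rewrite mulr1.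
move=> ->; rewrite -[RHS](proj2 hpol o); apply: eq_bigr => k _.
under eq_bigr => a _ do under eq_bigr => r _ do rewrite mulr1.
under eq_bigr => a _ do rewrite bern_sum mulr1.
by rewrite bern_sum mulr1.
Qed.

Lemma TpO_ge0 t (o : t.-tuple (obsT K)) : 0 <= Tp sO o.
Proof. by apply: prodr_ge0 => i _; apply: sO_ge0. Qed.

Lemma marg_obs t (F : seq (obsT K) -> R) :
  \sum_(w : t.-tuple (step K)) Tp (step_prob lam mu pol) w * F (map (@obs K) w) =
  \sum_(o : t.-tuple (obsT K)) Tp sO o * F o.
Proof.
elim: t F => [|t IH] F; first by rewrite sum_tuple0 sum_tuple0 !Tp0.
rewrite (sum_Tp_rcons _ t (fun u => F (map (@obs K) u))).
rewrite (sum_Tp_rcons _ t F).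
rewrite -(IH (fun o => \sum_y sO o y * F (rcons o y))).
apply: eq_bigr => w _; congr (_ * _).
under eq_bigr => x _ do rewrite map_rcons.
apply: (etrans (sum_step lam mu pol w id (fun a k r => F (rcons (map (@obs K) w) (k, r, a))))).
rewrite -(sO_sum_gen (map (@obs K) w) (fun a k r => F (rcons (map (@obs K) w) (k, r, a)))).
by apply: eq_bigr => [[[k r] a]].
Qed.

Lemma TpO_sum1 t : \sum_(o : t.-tuple (obsT K)) Tp sO o = 1.
Proof.
have := marg_obs t (fun _ => 1).
under eq_bigr => w _ do rewrite mulr1.
under [X in _ = X -> _]eq_bigr => w _ do rewrite mulr1.
by move=> <-; rewrite (@Tp_sum1 R K lam mu pol hpol t).
Qed.

Definition cntk (k : 'I_K) (o : seq (obsT K)) : nat := count (fun y => y.1.1 == k) o.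

Lemma EP_obs k t : expected_pulls lam mu pol k t =
  \sum_(o : t.-tuple (obsT K)) Tp sO o * (cntk k o)%:R.
Proof.
rewrite /expected_pulls -(marg_obs t (fun o => (cntk k o)%:R)).
by apply: eq_bigr => w _; rewrite /cntk count_map.
Qed.

Lemma E_add t (g : obsT K -> R) :
  \sum_(o : t.+1.-tuple (obsT K)) Tp sO o * \sum_(y <- o) g y =
  \sum_(o : t.-tuple (obsT K)) Tp sO o * \sum_(y <- o) g y +
  \sum_(o : t.-tuple (obsT K)) Tp sO o * \sum_y sO o y * g y.
Proof.
rewrite (sum_Tp_rcons _ t (fun o => \sum_(y <- o) g y)) -big_split /=.
apply: eq_bigr => o _; rewrite -mulrDr; congr (_ * _).
under eq_bigr => y _ do rewrite big_rcons /= mulrDr.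
by rewrite big_split /= -mulr_suml sO_sum1 mul1r.
Qed.

Lemma sO_indic o k : \sum_y sO o y * ((y.1.1 == k)%:R : R) = pol o k.
Proof.
rewrite (sO_sum_gen o (fun _ k' _ => ((k' == k)%:R : R))).
rewrite (bigD1 k) //= [X in _ + X]big1 ?addr0.
  rewrite eqxx; under eq_bigr => a _ do under eq_bigr => r _ do rewrite mulr1.
  under eq_bigr => a _ do rewrite bern_sum mulr1.
  by rewrite bern_sum mulr1.
by move=> j /negbTE hj; rewrite hj big1 ?mulr0 // => a _; rewrite big1 ?mulr0 // => r _; rewrite mulr0.
Qed.

Lemma cntk_sum k (o : seq (obsT K)) : ((cntk k o)%:R : R) = \sum_(y <- o) ((y.1.1 == k)%:R).
Proof.
elim: o => [|y o IH]; first by rewrite big_nil.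
by rewrite big_cons /cntk /= natrD -IH.
Qed.

Lemma E_lin t k (g : obsT K -> R) (c : R) :
  (forall o, \sum_y sO o y * g y = pol o k * c) ->
  \sum_(o : t.-tuple (obsT K)) Tp sO o * \sum_(y <- o) g y =
  c * \sum_(o : t.-tuple (obsT K)) Tp sO o * (cntk k o)%:R.
Proof.
move=> hg; elim: t => [|t IH].
  by rewrite !sum_tuple0 /= big_nil /cntk /= !mulr0.
under [in RHS]eq_bigr => o _ do rewrite cntk_sum.
rewrite E_add E_add IH.
under [in RHS]eq_bigr => o _ do rewrite -cntk_sum.
rewrite mulrDr; congr (_ + _).
rewrite mulr_sumr; apply: eq_bigr => o _.
by rewrite hg sO_indic; ring.
Qed.

End Obs.

Section Alt.
Variable R : realType.
Variable K : nat.
Variables (lam : R) (mu mu' : 'I_K -> R) (pol : policy R K) (k : 'I_K).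
Hypothesis hpol : valid_policy pol.
Hypothesis hlam : 0 <= lam <= 1.
Hypothesis hmu : forall j, 0 <= mu j <= 1.
Hypothesis hmu' : forall j, 0 <= mu' j <= 1.
Hypothesis hsame : forall j, j != k -> mu' j = mu j.
Hypothesis hq : 0 < mu' k < 1.

Definition ell (y : obsT K) : R :=
  if y.1.1 == k then ln (bern (mu k) y.1.2 / bern (mu' k) y.1.2) else 0.

Definition ll (o : seq (obsT K)) : R := \sum_(y <- o) ell y.

Lemma bern'_gt0 r : 0 < bern (mu' k) r.
Proof. by case/andP: hq; case: r => /= ? ?; lra. Qed.

Lemma LR_step o y : sO lam mu pol o y * expR (- ell y) <= sO lam mu' pol o y.
Proof.
rewrite /sO /ell; case: eqP => [->|/eqP hne]; last first.
  by rewrite oppr0 expR0 mulr1 hsame.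
have hb := bern'_gt0 y.1.2.
have [hb0|hb0] := eqVneq (bern (mu k) y.1.2) 0.
  rewrite hb0 mulr0 !mul0r; apply: mulr_ge0; last by case: hpol.
  by apply: mulr_ge0; apply: bern_ge0 => //; apply: hmu'.
have hbp : 0 < bern (mu k) y.1.2 by rewrite lt0r hb0 bern_ge0.
rewrite expRN lnK; last by rewrite posrE divr_gt0.
rewrite invf_div.
rewrite [X in X <= _](_ : _ = bern lam y.2 * bern (mu' k) y.1.2 * pol o k) //.
by field; rewrite gt_eqF.
Qed.

Lemma LR t (o : t.-tuple (obsT K)) :
  Tp (sO lam mu pol) o * expR (- ll o) <= Tp (sO lam mu' pol) o.
Proof.
elim: t o => [|t IH] o.
  by rewrite !Tp0 tuple0 /ll big_nil oppr0 expR0 mulr1.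
have [w [y ->]] := tupleS_rcons o.
rewrite !Tp_rcons /ll /= big_rcons /= opprD expRD.
rewrite mulrACA; apply: ler_pM.
- by apply: mulr_ge0; [exact: (TpO_ge0 hpol hlam hmu) | exact: expR_ge0].
- by apply: mulr_ge0; [exact: (sO_ge0 hpol hlam hmu) | exact: expR_ge0].
- exact: IH.
- exact: LR_step.
Qed.

Lemma sO_ell o : \sum_y sO lam mu pol o y * ell y = pol o k * bern_kl (mu k) (mu' k).
Proof.
rewrite (sO_sum_gen lam mu pol o (fun _ k' r => if k' == k then ln (bern (mu k) r / bern (mu' k) r) else 0)).
rewrite (bigD1 k) //= [X in _ + X]big1 ?addr0.
  rewrite eqxx; congr (_ * _).
  under eq_bigr => a _ do rewrite big_bool /=.
  rewrite -mulr_suml bern_sum mul1r /bern_kl //.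
by move=> j /negbTE hj; rewrite big1 ?mulr0 // => a _; rewrite big1 ?mulr0 // => r _; rewrite hj mulr0.
Qed.

Lemma E_ll t : \sum_(o : t.-tuple (obsT K)) Tp (sO lam mu pol) o * ll o =
  bern_kl (mu k) (mu' k) * expected_pulls lam mu pol k t.
Proof.
rewrite (EP_obs lam mu pol k t).
exact: (E_lin hpol t sO_ell).
Qed.

Lemma jensen t (P : pred (t.-tuple (obsT K))) (c : R) :
  c * (\sum_(o | P o) Tp (sO lam mu pol) o) + \sum_(o | P o) Tp (sO lam mu pol) o
  - expR c * \sum_(o | P o) Tp (sO lam mu' pol) o
  <= \sum_(o | P o) Tp (sO lam mu pol) o * ll o.
Proof.
rewrite mulr_sumr mulr_sumr -big_split -sumrB /=.
apply: ler_sum => o _.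
have h1 := LR o.
have h2 := expR_ge1Dx (- (ll o - c)).
have hp := TpO_ge0 hpol hlam hmu o.
rewrite opprB expRB in h2.
set p := Tp _ o in h1 h2 hp *; set p' := Tp _ o in h1 *.
have e : p * expR (- ll o) * expR c = p * (expR c / expR (ll o)) by rewrite expRN; ring.
have hec := expR_gt0 c.
have h3 : p * (1 + (c - ll o)) <= p * (expR c / expR (ll o)) by apply: ler_wpM2l.
have h4 : p * expR (- ll o) * expR c <= p' * expR c by apply: ler_wpM2r => //; exact: ltW.
rewrite e in h4.
nra.
Qed.

End Alt.

Lemma sum_count_sched (R : realType) K (w : seq (step K)) :
  \sum_(j < K) ((count (fun x => sched x == j) w)%:R : R) = (size w)%:R.
Proof.
elim: w => [|x w IH] /=; first by rewrite big1.
rewrite (eq_bigr (fun j => ((sched x == j)%:R : R) + (count (fun x => sched x == j) w)%:R)); last first.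
  by move=> j _; rewrite natrD.
rewrite big_split /= IH (bigD1 (sched x)) //= eqxx big1 ?addr0.
  by rewrite -natr1 addrC.
by move=> j hj; rewrite eq_sym (negbTE hj).
Qed.

Lemma sum_EP (R : realType) K (lam : R) mu (pol : policy R K) t :
  valid_policy pol ->
  \sum_j expected_pulls lam mu pol j t = t%:R.
Proof.
move=> hpol; rewrite /expected_pulls exchange_big /=.
rewrite (eq_bigr (fun w => Tp (step_prob lam mu pol) w * t%:R)).
  by rewrite -mulr_suml (@Tp_sum1 R K lam mu pol hpol) mul1r.
by move=> w _; rewrite -mulr_sumr sum_count_sched size_tuple.
Qed.

Lemma arm_lb (R : realType) K (lam : R) (mu : 'I_K -> R) (ks : 'I_K) (pol : policy R K)
  (alpha : R) (k : 'I_K) :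
  instance lam mu ks -> mu ks < 1 -> 0 < alpha < 1 -> valid_policy pol ->
  alpha_consistent alpha pol -> k != ks ->
  exists c : R, exists T : nat, forall t : nat, (T <= t)%N ->
    (1 - alpha) / 2 * ln (t%:R : R) - c <=
      bern_kl (mu k) ((mu ks + 1) / 2) * expected_pulls lam mu pol k t.
Proof.
move=> hinst hks1 /andP[ha0 ha1] hpol hcons hk.
have hinst' := hinst; case: hinst' => /andP[hl0 hl1] [hmu [hlt hlks]].
have hlam : 0 <= lam <= 1 by apply/andP.
set q := (mu ks + 1) / 2.
pose mu' := fun j => if j == k then q else mu j.
have hmuks : forall j, mu j <= mu ks.
  by move=> j; case: (eqVneq j ks) => [->//|hj]; exact: ltW (hlt j hj).
have hq : 0 < q < 1 by apply/andP; split; rewrite /q; lra.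
have hmu' : forall j, 0 <= mu' j <= 1.
  move=> j; rewrite /mu'; case: eqP => _; last exact: hmu.
  by case/andP: hq => ? ?; apply/andP; split; lra.
have hsame : forall j, j != k -> mu' j = mu j by move=> j /negbTE hj; rewrite /mu' hj.
have hmu'k : mu' k = q by rewrite /mu' eqxx.
have hq' : 0 < mu' k < 1 by rewrite hmu'k.
have hinst2 : instance lam mu' k.
  split; first exact hlam. split; first exact hmu'. split.
    move=> j hj; rewrite hsame // hmu'k; apply: (le_lt_trans (hmuks j)); rewrite /q; lra.
  rewrite hmu'k /q; lra.
have [C1 [T1 hC1]] := hcons lam mu ks hinst k hk.
have halt := hcons lam mu' k hinst2.
have : forall j : 'I_K, exists CT : R * nat, j != k -> forall t, (CT.2 <= t)%N ->
    expected_pulls lam mu' pol j t <= CT.1 * (t%:R `^ alpha).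
  move=> j; case: (eqVneq j k) => [->|hj]; first by exists (0, 0%N) => /eqP [].
  by have [C [T hCT]] := halt j hj; exists (C, T).
move=> /choice [f hf].
set C1' := 1 + `|C1|.
set C2 := 1 + \sum_j `|(f j).1|.
set T2 := (\sum_j (f j).2)%N.
set M := `|ln (4 * C1')| + `|ln (4 * C2)|.
set T3 := Num.Def.archi_bound (expR (M / (1 - alpha))).
exists (ln (4 * C2) / 2 + 1), (T1 + T2 + T3 + 1)%N => t ht.
have hT1 : (T1 <= t)%N by clear -ht; lia.
have hT2 : (T2 <= t)%N by clear -ht; lia.
have hT3 : (T3 <= t)%N by clear -ht; lia.
have hC1'0 : 0 < C1' by rewrite /C1'; have := normr_ge0 C1; lra.
have hC20 : 0 < C2.
  rewrite /C2; have : 0 <= \sum_j `|(f j).1| by apply: sumr_ge0 => j _.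
  lra.
set tR := (t%:R : R).
have htR : 0 < tR by rewrite /tR ltr0n; clear -ht; lia.
set y := ln tR.
have htRy : tR = expR y by rewrite /y lnK // posrE.
have hpow : tR `^ alpha = expR (alpha * y) by rewrite /powR gt_eqF.
have hyM : M <= (1 - alpha) * y.
  have h3 : expR (M / (1 - alpha)) < tR.
    apply: (lt_le_trans (archi_boundP (expR_ge0 _))).
    by rewrite /tR ler_nat.
  have h4 : M / (1 - alpha) < y.
    by rewrite /y -[X in X < _]expRK ltr_ln ?posrE ?expR_gt0.
  have ha : 0 < 1 - alpha by lra.
  rewrite ltr_pdivrMr // in h4; lra.
have hEk : expected_pulls lam mu pol k t <= C1' * expR (alpha * y).
  apply: (le_trans (hC1 t hT1)); rewrite hpow; apply: ler_wpM2r; first exact: expR_ge0.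
  by rewrite /C1'; have := ler_norm C1; lra.
have hEj : \sum_(j | j != k) expected_pulls lam mu' pol j t <= C2 * expR (alpha * y).
  apply: (le_trans (y := \sum_(j | j != k) `|(f j).1| * expR (alpha * y))).
    apply: ler_sum => j hj.
    have hfj : ((f j).2 <= t)%N.
      apply: leq_trans hT2; rewrite /T2 (bigD1 j) //=; exact: leq_addr.
    apply: (le_trans (hf j hj t hfj)); rewrite hpow; apply: ler_wpM2r; first exact: expR_ge0.
    exact: ler_norm.
  rewrite -mulr_suml; apply: ler_wpM2r; first exact: expR_ge0.
  rewrite /C2 [X in _ <= 1 + X](bigD1 k) //=; have := normr_ge0 (f k).1; lra.
pose P := fun (o : t.-tuple (obsT K)) => (2 * cntk k o <= t)%N.
set p := @Tp R _ (sO lam mu pol) t.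
set p' := @Tp R _ (sO lam mu' pol) t.
have hp0 (o : t.-tuple (obsT K)) : 0 <= p o := TpO_ge0 hpol hlam hmu o.
have hp'0 (o : t.-tuple (obsT K)) : 0 <= p' o := TpO_ge0 hpol hlam hmu' o.
have hsum1 : \sum_o p o = 1 := TpO_sum1 lam mu hpol t.
have hsum1' : \sum_o p' o = 1 := TpO_sum1 lam mu' hpol t.
have hsum := TpO_sum1 lam mu hpol t.
have hsum' := TpO_sum1 lam mu' hpol t.
rewrite (bigID P) /= in hsum.
rewrite (bigID P) /= in hsum'.
have hcnt (o : t.-tuple (obsT K)) : (cntk k o <= t)%N.
  by rewrite /cntk -[X in (_ <= X)%N](size_tuple o) count_size.
have hEk' := EP_obs lam mu pol k t.
have hE'k := EP_obs lam mu' pol k t.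
have hM1 : tR * (\sum_(o | ~~ P o) p o) <= 2 * expected_pulls lam mu pol k t.
  rewrite hEk' mulr_sumr mulr_sumr.
  apply: (le_trans (y := \sum_(o | ~~ P o) 2 * (p o * (cntk k o)%:R))).
    apply: ler_sum => o hPo.
    rewrite [tR * _]mulrC mulrCA; apply: ler_wpM2l => //.
    have : (t <= 2 * cntk k o)%N by move: hPo; rewrite /P -ltnNge => /ltnW.
    by rewrite -(ler_nat R) natrM.
  rewrite [X in _ <= X](bigID P) /= lerDr; apply: sumr_ge0 => o _.
  by apply: mulr_ge0 => //; apply: mulr_ge0.
have hM2 : tR * (\sum_(o | P o) p' o) <= 2 * (tR - expected_pulls lam mu' pol k t).
  rewrite hE'k mulr_sumr.
  have -> : tR - \sum_o p' o * (cntk k o)%:R = \sum_o p' o * (tR - (cntk k o)%:R).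
    under [in RHS]eq_bigr => o _ do rewrite mulrBr.
    by rewrite sumrB -mulr_suml hsum1' mul1r.
  rewrite mulr_sumr.
  apply: (le_trans (y := \sum_(o | P o) 2 * (p' o * (tR - (cntk k o)%:R)))).
    apply: ler_sum => o hPo.
    rewrite [tR * _]mulrC mulrCA; apply: ler_wpM2l => //.
    have : (2 * cntk k o <= t)%N by [].
    rewrite -(ler_nat R) natrM /tR; lra.
  rewrite [X in _ <= X](bigID P) /= lerDl; apply: sumr_ge0 => o _.
  apply: mulr_ge0 => //; apply: mulr_ge0 => //.
  by rewrite subr_ge0 /tR ler_nat.
have hsplitEP : tR - expected_pulls lam mu' pol k t = \sum_(j | j != k) expected_pulls lam mu' pol j t.
  by rewrite /tR -(sum_EP lam mu' t hpol) (bigD1 k) //= addrAC subrr add0r.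
have hE1 : expR ((1 - alpha) * y) * expR (alpha * y) = tR.
  by rewrite -expRD htRy; congr expR; ring.
have hea := expR_gt0 (alpha * y).
have h4C1 : 4 * C1' <= expR ((1 - alpha) * y).
  rewrite -[X in X <= _]lnK ?posrE; last by apply: mulr_gt0.
  rewrite ler_expR; apply: le_trans hyM; rewrite /M; have := ler_norm (ln (4 * C1')).
  have := normr_ge0 (ln (4 * C2)); lra.
have h4C2 : ln (4 * C2) <= (1 - alpha) * y.
  apply: le_trans hyM; rewrite /M; have := ler_norm (ln (4 * C2)).
  have := normr_ge0 (ln (4 * C1')); lra.
set A := expR ((1 - alpha) * y) in hE1 h4C1.
set Ea := expR (alpha * y) in hE1 hea hEk hEj.
set X := \sum_(o | ~~ P o) p o in hM1 hsum.
set Y := \sum_(o | P o) p o in hsum.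
set X' := \sum_(o | ~~ P o) p' o in hsum'.
set Y' := \sum_(o | P o) p' o in hM2 hsum'.
have hX0 : 0 <= X by apply: sumr_ge0.
have hY'0 : 0 <= Y' by apply: sumr_ge0.
have hXh : X <= 1 / 2.
  have h1 : tR * X <= tR * (1 / 2).
    have h2 : 4 * C1' * Ea <= A * Ea by apply: ler_wpM2r => //; exact: ltW.
    lra.
  by rewrite ler_pM2l in h1.
have hYh : 1 / 2 <= Y by lra.
set c0 := (1 - alpha) * y - ln (4 * C2).
have hc0 : 0 <= c0 by rewrite /c0; lra.
have hec0 : expR c0 = A / (4 * C2).
  by rewrite /c0 expRB lnK // posrE; apply: mulr_gt0.
have hY'h : expR c0 * Y' <= 1 / 2.
  rewrite hec0.
  have h1 : A * Ea * Y' <= 2 * C2 * Ea.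
    rewrite hE1; apply: (le_trans hM2); rewrite hsplitEP; lra.
  have h2 : A * Y' <= 2 * C2.
    rewrite -(ler_pM2r hea); rewrite mulrAC; lra.
  rewrite mulrAC ler_pdivrMr; last by apply: mulr_gt0.
  lra.
have hJ1 : c0 * Y + Y - expR c0 * Y' <= \sum_(o | P o) p o * ll mu mu' k o.
  exact: (jensen hpol hlam hmu hmu' hsame hq' P c0).
have hJ2 : 0 * X + X - expR 0 * X' <= \sum_(o | ~~ P o) p o * ll mu mu' k o.
  exact: (jensen hpol hlam hmu hmu' hsame hq' (fun o => ~~ P o) 0).
have hEll : \sum_o p o * ll mu mu' k o = bern_kl (mu k) q * expected_pulls lam mu pol k t.
  by rewrite -hmu'k; exact: (E_ll lam mu mu' k hpol t).
rewrite (bigID P) /= in hEll.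
rewrite -hEll.
rewrite expR0 in hJ2.
have hcY : c0 / 2 <= c0 * Y.
  have := mulr_ge0 hc0 (_ : 0 <= Y - 1 / 2); rewrite mulrBr; lra.
have : (1 - alpha) / 2 * ln tR - (ln (4 * C2) / 2 + 1) = ((1 - alpha) * y - ln (4 * C2)) / 2 - 1.
  by rewrite /y; field.
rewrite /tR => ->.
have ec0 : c0 = (1 - alpha) * y - ln (4 * C2) by [].
lra.
Qed.

Section KLmono.
Variable R : realType.

Lemma xlog (a m b : R) : 0 <= a -> 0 < m -> 0 < b ->
  a - m <= a * ln (a / b) - a * ln (m / b).
Proof.
move=> ha hm hb.
have [->|ha0] := eqVneq a 0; first by rewrite !mul0r subrr sub0r oppr_le0 ltW.
have hap : 0 < a by rewrite lt0r ha0.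
have -> : a * ln (a / b) - a * ln (m / b) = a * (ln a - ln m).
  by rewrite !ln_div ?posrE //; ring.
have h1 : ln (m / a) <= m / a - 1.
  have := @le_ln1Dx R (m / a - 1).
  have -> : 1 + (m / a - 1) = m / a by ring.
  apply.
  by have := divr_gt0 hm hap; lra.
rewrite ln_div ?posrE // in h1.
have h2 : a * (m / a - 1) = m - a by field.
have h3 := ler_wpM2l (ltW hap) h1.
rewrite h2 in h3; rewrite mulrBr; rewrite mulrBr in h3; lra.
Qed.

Lemma kl_ge0 (p q : R) : 0 <= p <= 1 -> 0 < q < 1 -> 0 <= bern_kl p q.
Proof.
move=> /andP[p0 p1] /andP[q0 q1]; rewrite /bern_kl.
have h1 := xlog p0 q0 q0.
have hp' : 0 <= 1 - p by lra.
have hq' : 0 < 1 - q by lra.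
have h2 := @xlog (1 - p) (1 - q) (1 - q) hp' hq' hq'.
rewrite divff ?gt_eqF // ln1 mulr0 subr0 in h1.
rewrite divff ?gt_eqF ?subr_gt0 // ln1 mulr0 subr0 in h2.
lra.
Qed.

Lemma kl_mono (p1 p2 q : R) : 0 <= p1 -> p1 <= p2 -> p2 < q -> q < 1 ->
  bern_kl p2 q <= bern_kl p1 q.
Proof.
move=> h0 h12 h2q hq1.
have hq0 : 0 < q by lra.
have [e|hp2] := eqVneq p2 0.
  by have -> : p1 = p2 by rewrite e in h12 *; lra.
have hp2p : 0 < p2 by rewrite lt0r hp2 /=; lra.
have hqp1 : 0 < q - p1 by lra.
set th := (q - p2) / (q - p1).
have hth0 : 0 <= th by rewrite /th divr_ge0 //; lra.
have hth1 : th <= 1 by rewrite /th ler_pdivrMr // mul1r; lra.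
have e1 : th * p1 + (1 - th) * q = p2 by rewrite /th; field; rewrite gt_eqF.
have e2 : th * (1 - p1) + (1 - th) * (1 - q) = 1 - p2 by rewrite /th; field; rewrite gt_eqF.
have hp1' : 0 <= 1 - p1 by lra.
have hp2' : 0 < 1 - p2 by lra.
have hq' : 0 < 1 - q by lra.
have hq'' : 0 <= 1 - q by lra.
have hth' : 0 <= 1 - th by lra.
have hg : 0 <= bern_kl p1 q.
  by apply: kl_ge0; apply/andP; split; lra.
rewrite /bern_kl in hg *.
have a1 := xlog h0 hp2p hq0.
have a2 := xlog (ltW hq0) hp2p hq0.
have b1 := xlog hp1' hp2' hq'.
have b2 := xlog hq'' hp2' hq'.
rewrite divff ?gt_eqF // ln1 mulr0 sub0r in a2.
rewrite divff ?gt_eqF // ln1 mulr0 sub0r in b2.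
set L1 := ln (p2 / q) in a1 a2 *.
set L2 := ln ((1 - p2) / (1 - q)) in b1 b2 *.
set G1 := p1 * ln (p1 / q) in hg a1 *.
set G2 := (1 - p1) * ln ((1 - p1) / (1 - q)) in hg b1 *.
have ha1 := ler_wpM2l hth0 a1.
have ha2 := ler_wpM2l hth' a2.
have hb1 := ler_wpM2l hth0 b1.
have hb2 := ler_wpM2l hth' b2.
have f1 : p2 * L1 = th * (p1 * L1) + (1 - th) * (q * L1) by rewrite -e1; ring.
have f2 : (1 - p2) * L2 = th * ((1 - p1) * L2) + (1 - th) * ((1 - q) * L2) by rewrite -e2; ring.
have hGs : th * (G1 + G2) <= G1 + G2.
  have := ler_wpM2r hg hth1; rewrite mul1r; by [].
rewrite !mulrBr in ha1 ha2 hb1 hb2.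
have k1 : th * p1 + (1 - th) * q - p2 = 0 by rewrite e1 subrr.
have k2 : th * (1 - p1) + (1 - th) * (1 - q) - (1 - p2) = 0 by rewrite e2 subrr.
rewrite mulrDr in hGs.
lra.
Qed.
End KLmono.

Lemma harm_ln (R : realType) (t : nat) : (1 <= t)%N ->
  1 / (t.+1%:R : R) <= ln (t.+1%:R : R) - ln (t%:R : R).
Proof.
move=> ht.
have htp : 0 < (t%:R : R) by rewrite ltr0n.
have ht1 : 0 < (t.+1%:R : R) by rewrite ltr0n.
have := @le_ln1Dx R (- (1 / t.+1%:R)).
have hx : - 1 < - (1 / (t.+1%:R : R)).
  rewrite ltrN2 ltr_pdivrMr // mul1r ltr1n; lia.
move/(_ hx).
have -> : 1 + - (1 / (t.+1%:R : R)) = t%:R / t.+1%:R.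
  by rewrite -natr1; field; rewrite -natr1 in ht1; rewrite gt_eqF.
rewrite ln_div ?posrE // => h.
move: h; set u := 1 / _; set a := ln _; set b := ln _ => h; lra.
Qed.

Lemma Ssum_step (R : realType) K (lam : R) (mu : 'I_K -> R) (pol : policy R K) (ks : 'I_K) s :
  valid_policy pol ->
  \sum_(k | k != ks) expected_pulls lam mu pol k s.+1 =
  \sum_(k | k != ks) expected_pulls lam mu pol k s +
  \sum_(w : s.-tuple (step K)) Tp (step_prob lam mu pol) w *
     \sum_(k | k != ks) pol (map (@obs K) w) k.
Proof.
move=> hpol.
under eq_bigr => k _ do rewrite (EP_step lam mu hpol).
rewrite big_split /=; congr (_ + _).
rewrite exchange_big /=; apply: eq_bigr => w _; by rewrite mulr_sumr.
Qed.

Unset Implicit Arguments.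
Local Open Scope classical_set_scope.
Local Open Scope ring_scope.

Theorem theorem1 (R : realType) (K : nat) (lam : R) (mu : 'I_K -> R)
    (ks : 'I_K) (pi : nat -> R) (alpha : R) (pol : policy R K) :
  (2 <= K)%N ->
  instance lam mu ks ->
  stationary_dist lam (mu ks) pi ->
  0 < alpha < 1 ->
  valid_policy pol ->
  alpha_consistent alpha pol ->
  forall N : nat, exists t : nat, (N < t)%N /\
    queue_regret lam mu ks pol pi t >=
      (lam / 4 * Dmu mu ks * (1 - alpha) * (K%:R - 1)) / t%:R.
Proof.
move=> hK hinst hstat /andP[ha0 ha1] hpol hcons N.
have hinst' := hinst; case: hinst' => /andP[hl0 hl1] [hmu [hlt hlks]].
have hlam : 0 <= lam <= 1 by apply/andP.
have hmuks : forall j, mu j <= mu ks.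
  by move=> j; case: (eqVneq j ks) => [->//|hj]; exact: ltW (hlt j hj).
case: hstat => hpi0 [hcv _].
pose S t := \sum_(k | k != ks) expected_pulls lam mu pol k t.
set Dl := gap mu ks.
have hmaxle : forall k, k != ks -> mu k <= \big[Num.max/0]_(j < K | j != ks) mu j.
  by move=> k hk; apply: le_bigmax_cond.
have hmaxlt : \big[Num.max/0]_(j < K | j != ks) mu j < mu ks.
  by apply: bigmax_lt; [lra | move=> j hj; exact: hlt].
have hDl : 0 < Dl by rewrite /Dl /gap subr_gt0.
have hgapk : forall k, k != ks -> Dl <= mu ks - mu k.
  by move=> k hk; rewrite /Dl /gap; have := hmaxle k hk; lra.
have hkey : forall s, lam * Dl * (S s.+1 - S s) <= queue_regret lam mu ks pol pi s.+1.
  move=> s; apply: le_trans (psi_lb s hpol hlam hmu hmuks hpi0 hcv).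
  rewrite /S Ssum_step // addrAC subrr add0r -mulrA; apply: ler_wpM2l => //.
  rewrite mulr_sumr; apply: ler_sum => w _.
  rewrite mulrCA; apply: ler_wpM2l; first exact: (Tp_ge0 hpol hlam hmu).
  rewrite mulr_sumr [X in _ <= X](bigD1 ks) //= subrr mulr0 add0r.
  apply: ler_sum => k hk; rewrite mulrC; apply: ler_wpM2l; [exact: (proj1 hpol) | exact: hgapk].
have hSinc : forall s, S s <= S s.+1.
  move=> s; rewrite /S Ssum_step // lerDl; apply: sumr_ge0 => w _.
  apply: mulr_ge0; first exact: (Tp_ge0 hpol hlam hmu).
  by apply: sumr_ge0 => k _; exact: (proj1 hpol).
set c0 := lam / 4 * Dmu mu ks * (1 - alpha) * (K%:R - 1).
have [hc0|hc0] := lerP c0 0.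
  exists N.+1; split => //.
  apply: le_trans (hkey N).
  apply: (le_trans (y := 0)).
    by apply: mulr_le0_ge0 => //; rewrite invr_ge0.
  apply: mulr_ge0; first by apply: mulr_ge0 => //; exact: ltW.
  by rewrite subr_ge0.
have hlamp : 0 < lam.
  rewrite lt0r hl0 andbT; apply/eqP => e; move: hc0; rewrite /c0 e !mul0r; by rewrite ltxx.
have hK1 : 0 < K%:R - 1 :> R by rewrite subr_gt0 ltr1n.
have ha : 0 < 1 - alpha by lra.
have hD : 0 < Dmu mu ks.
  rewrite ltNge; apply/negP => hD0; move: hc0; rewrite ltNge => /negP; apply.
  rewrite /c0; apply: mulr_le0_ge0; last exact: ltW.
  apply: mulr_le0_ge0; last exact: ltW.
  by apply: mulr_ge0_le0 => //; apply: divr_ge0 => //; exact: ltW.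
move: (hD); rewrite /Dmu; case: ifP => hks1; last by rewrite ltxx.
move=> hD'.
set q := (mu ks + 1) / 2.
set KL := bern_kl (mu_min mu) q.
have hKL : 0 < KL.
  rewrite ltNge; apply/negP => h; move: hD'; rewrite ltNge => /negP; apply.
  by apply: mulr_ge0_le0; [exact: ltW | rewrite invr_le0].
have hmin0 : 0 <= mu_min mu.
  by apply/bigmin_geP; split => // j _; case/andP: (hmu j).
have hminle : forall k, mu_min mu <= mu k by move=> k; exact: bigmin_le.
have hEP0 : forall k t, 0 <= expected_pulls lam mu pol k t.
  move=> k t; apply: sumr_ge0 => w _; apply: mulr_ge0; first exact: (Tp_ge0 hpol hlam hmu).
  exact: ler0n.
have : forall k : 'I_K, exists cT : R * nat, k != ks -> forall t : nat, (cT.2 <= t)%N ->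
    (1 - alpha) / 2 * ln (t%:R : R) - cT.1 <= KL * expected_pulls lam mu pol k t.
  move=> k; case: (eqVneq k ks) => [->|hk]; first by exists (0, 0%N) => /eqP [].
  have halpha : 0 < alpha < 1 by apply/andP.
  have [c [T hcT]] := arm_lb hinst hks1 halpha hpol hcons hk.
  exists (c, T) => _ t ht; apply: (le_trans (hcT t ht)).
  apply: ler_wpM2r; first exact: hEP0.
  apply: kl_mono => //; first by rewrite /q; have := hlt k hk; lra.
  by rewrite /q; lra.
move=> /choice [g hg].
set cc := \sum_(k | k != ks) (g k).1.
set TT := (\sum_k (g k).2)%N.
have hconst : forall x : R, \sum_(k | k != ks) x = x * (K%:R - 1).
  move=> x; have e : \sum_(k < K) x = x + \sum_(k | k != ks) x by rewrite (bigD1 ks).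
  have e2 : \sum_(k < K) x = x * K%:R by rewrite sumr_const card_ord mulr_natr.
  by rewrite mulrBr mulr1 -e2 e addrAC subrr add0r.
have hlow : forall t, (TT <= t)%N ->
    (K%:R - 1) * ((1 - alpha) / 2 * ln (t%:R : R)) - cc <= KL * S t.
  move=> t ht; rewrite /S mulr_sumr mulrC -hconst /cc -sumrB.
  apply: ler_sum => k hk; apply: hg => //.
  by apply: leq_trans ht; rewrite /TT (bigD1 k) //= leq_addr.
apply: contrapT => hneg.
have hup : forall s, (N <= s)%N -> lam * Dl * (S s.+1 - S s) <= c0 / s.+1%:R.
  move=> s hs; apply: (le_trans (hkey s)); rewrite leNgt; apply/negP => hlt2.
  by apply: hneg; exists s.+1; split => //; exact: ltW.
set c1 := c0 / (lam * Dl).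
have hlD : 0 < lam * Dl by apply: mulr_gt0.
have hc1 : 0 <= c1 by apply: divr_ge0; [exact: ltW | exact: ltW].
have hinc : forall s, (N <= s)%N -> S s.+1 - S s <= c1 / s.+1%:R.
  move=> s hs; have := hup s hs => h.
  by rewrite /c1 mulrAC ler_pdivlMr // mulrC.
set N1 := N.+1.
have hS : forall d, S (N1 + d)%N <= S N1 + c1 * (ln ((N1 + d)%N%:R : R) - ln (N1%:R : R)).
  elim=> [|d IH]; first by rewrite addn0 subrr mulr0 addr0.
  rewrite addnS.
  have hNd : (N <= N1 + d)%N by rewrite /N1; clear; lia.
  have hNd1 : (1 <= N1 + d)%N by rewrite /N1; clear; lia.
  have h1 := hinc (N1 + d)%N hNd.
  have h2 := @harm_ln R (N1 + d)%N hNd1.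
  have h3 := ler_wpM2l hc1 h2.
  rewrite mulrA mulr1 in h3.
  rewrite mulrBr in h3; rewrite mulrBr in IH; rewrite mulrBr.
  move: h1 h3 IH; clear h2.
  set u1 := S (N1 + d).+1; set u2 := S (N1 + d)%N; set u3 := S N1.
  set v1 := c1 / _; set w1 := c1 * ln (N1 + d).+1%:R; set w2 := c1 * ln (N1 + d)%:R.
  set w3 := c1 * ln N1%:R.
  move=> h1 h3 IH; lra.
set a := (K%:R - 1) * (1 - alpha) / 4.
have ha4 : 0 < a by rewrite /a; apply: divr_gt0 => //; apply: mulr_gt0.
have ec : KL * c1 = a.
  rewrite /c1 /c0 /Dmu hks1 /a -/q -/KL -/Dl.
  by field; rewrite !gt_eqF.
set Z := cc + KL * S N1 - a * ln (N1%:R : R).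
set t0 := Num.Def.archi_bound (expR (`|Z| / a)).
set t := (N1 + (TT + t0))%N.
have htT : (TT <= t)%N by rewrite /t; clear; lia.
have htt0 : (t0 <= t)%N by rewrite /t; clear; lia.
have htpos : 0 < (t%:R : R) by rewrite ltr0n /t; clear; lia.
have hlowt := hlow t htT.
have hSt : S t <= S N1 + c1 * (ln (t%:R : R) - ln (N1%:R : R)) by exact: hS.
have hL : `|Z| / a < ln (t%:R : R).
  rewrite -[X in X < _]expRK ltr_ln ?posrE ?expR_gt0 //.
  apply: (lt_le_trans (archi_boundP (expR_ge0 _))).
  by rewrite ler_nat.
have hKS := ler_wpM2l (ltW hKL) hSt.
rewrite mulrDr mulrA ec in hKS.
have haL := ltr_pM2l ha4 _ _; rewrite -/a in haL.
have haL' : `|Z| < a * ln (t%:R : R).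
  by rewrite -(haL (`|Z| / a)) in hL; rewrite mulrC divfK ?gt_eqF // in hL.
have hZ := ler_norm Z.
have e2 : (K%:R - 1) * ((1 - alpha) / 2 * ln (t%:R : R)) = 2 * (a * ln (t%:R : R)) by rewrite /a; field.
rewrite e2 in hlowt.
have eZ : Z = cc + KL * S N1 - a * ln (N1%:R : R) by [].
move: hlowt hKS haL' hZ eZ.
set L := a * ln (t%:R : R); set L0 := a * ln (N1%:R : R).
rewrite mulrBr -/L -/L0.
move=> *; lra.
Qed.
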